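(* Let $T\subset\mathbb{S}^{d-1}$ be a path simplex with vertices $p_1,\dots,p_d$ ordered along its path, and let $g_i$ be the inward facing normal to the facet opposite $p_i$. Then the Gram matrix $G_T^tG_T$, where $G_T=[g_1\,\cdots\,g_d]$, is tridiagonal, i.e. $g_i\cdot g_j=0$ whenever $|i-j|\ge 2$.
   Context: A spherical simplex in $\mathbb{S}^{d-1}\subset\mathbb{R}^d$ with vertices $p_1,\dots,p_d$ (linearly independent unit vectors) is $\mathbb{S}^{d-1}$ intersected with the cone $\{\sum_i\lambda_ip_i:\lambda_i\ge 0\}$; its facet $F_i$ is the face not containing $p_i$, and the inward normal $g_i$ is a vector orthogonal to the span of $\{p_j:j\ne i\}$ with $g_i\cdot p_i>0$. A path simplex is a spherical simplex whose vertices can be ordered $p_1,\dots,p_d$ so that the edges $p_1p_2,\dots,p_{d-1}p_d$ form a path whose edges are mutually at right angles in the following sense: for each $1\le i\le d-1$, the tangent vector $p_i-(p_i\cdot p_{i+1})p_{i+1}$ of the arc $p_ip_{i+1}$ at $p_{i+1}$ is orthogonal to each of $p_{i+1},\dots,p_d$. The endpoints $p_1,p_d$ of the path are its end vertices. *)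

(* Defs.v *)
From mathcomp Require Import all_boot all_order all_algebra.
Set Implicit Arguments. Unset Strict Implicit. Unset Printing Implicit Defensive.
Import Order.TTheory GRing.Theory Num.Theory.
Local Open Scope ring_scope.

Definition dot (R : realFieldType) (d : nat) (u v : 'rV[R]_d) : R :=
  \sum_(k < d) u 0 k * v 0 k.

Definition vert_mx (R : realFieldType) (d : nat) (p : 'I_d -> 'rV[R]_d)
  : 'M[R]_d := \matrix_(i < d, k < d) p i 0 k.

Definition spherical_simplex (R : realFieldType) (d : nat)
  (p : 'I_d -> 'rV[R]_d) : Prop :=
  (forall i, dot (p i) (p i) = 1) /\ row_free (vert_mx p).

(* path condition, vertices already ordered along the path: for each
   consecutive pair (p_i, p_{i+1}), the tangent p_i - (p_i.p_{i+1}) p_{i+1}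
   is orthogonal to p_{i+1}, ..., p_d *)
Definition path_simplex (R : realFieldType) (d : nat)
  (p : 'I_d -> 'rV[R]_d) : Prop :=
  spherical_simplex p /\
  (forall i j k : 'I_d, nat_of_ord j = i.+1 -> (j <= k)%N ->
     dot (p i - dot (p i) (p j) *: p j) (p k) = 0).

Definition inward_normal (R : realFieldType) (d : nat)
  (p : 'I_d -> 'rV[R]_d) (i : 'I_d) (g : 'rV[R]_d) : Prop :=
  (forall j, j != i -> dot g (p j) = 0) /\ 0 < dot g (p i).

(* G_T = [g_1 ... g_d] (columns); Gram matrix G_T^t G_T *)
Definition normal_mx (R : realFieldType) (d : nat) (g : 'I_d -> 'rV[R]_d)
  : 'M[R]_d := \matrix_(k < d, i < d) g i 0 k.

(* Main.v *)
Require Import Defs.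
From mathcomp Require Import all_boot all_order all_algebra.
Import Order.TTheory GRing.Theory Num.Theory.
Local Open Scope ring_scope.

Section Aux.
Variables (R : realFieldType) (d : nat).
Implicit Types u v w : 'rV[R]_d.

Lemma dotC u v : dot u v = dot v u.
Proof. by apply: eq_bigr => k _; rewrite mulrC. Qed.

Lemma dotDl u v w : dot (u + v) w = dot u w + dot v w.
Proof. by rewrite /dot -big_split; apply: eq_bigr => k _; rewrite mxE mulrDl. Qed.

Lemma dotNl u w : dot (- u) w = - dot u w.
Proof. by rewrite /dot -sumrN; apply: eq_bigr => k _; rewrite mxE mulNr. Qed.

Lemma dotBl u v w : dot (u - v) w = dot u w - dot v w.
Proof. by rewrite dotDl dotNl. Qed.

Lemma dotZl a u w : dot (a *: u) w = a * dot u w.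
Proof. by rewrite /dot mulr_sumr; apply: eq_bigr => k _; rewrite mxE mulrA. Qed.

Lemma dotBr u v w : dot w (u - v) = dot w u - dot w v.
Proof. by rewrite ![dot w _]dotC dotBl. Qed.

Lemma dotZr a u w : dot w (a *: u) = a * dot w u.
Proof. by rewrite ![dot w _]dotC dotZl. Qed.

Lemma dot_self_eq0 u : dot u u = 0 -> u = 0.
Proof.
move=> H; apply/rowP => k; rewrite mxE.
have /psumr_eq0P H2 : forall i : 'I_d, true -> 0 <= u 0 i * u 0 i.
  by move=> i _; rewrite -expr2 sqr_ge0.
have := H2 H k isT; move/eqP; rewrite mulf_eq0 orbb => /eqP.
by apply.
Qed.

Lemma perp_all_eq0 (p : 'I_d -> 'rV[R]_d) v :
  row_free (vert_mx p) -> (forall k, dot v (p k) = 0) -> v = 0.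
Proof.
move=> rf H.
have U : vert_mx p \in unitmx by rewrite -row_free_unit.
have E : vert_mx p *m v^T = 0.
  apply/matrixP => i j; rewrite !mxE -[RHS](H i) dotC.
  by apply: eq_bigr => k _; rewrite !mxE (ord1 j).
have : v^T = 0 by rewrite -(mulKmx U v^T) E mulmx0.
by move/(congr1 trmx); rewrite trmxK linear0.
Qed.
End Aux.
Arguments dotC {R d}. Arguments dotDl {R d}. Arguments dotBl {R d}. Arguments dotBr {R d}. Arguments dotZl {R d}. Arguments dotZr {R d}.
Arguments perp_all_eq0 {R d p v}.
Arguments dot_self_eq0 {R d u}.

Theorem claim4p3 (R : realFieldType) (d : nat)
  (p g : 'I_d -> 'rV[R]_d) :
  path_simplex p ->
  (forall i, inward_normal p i (g i)) ->
  forall i j : 'I_d, ((i + 2 <= j) || (j + 2 <= i))%N ->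
    ((normal_mx g)^T *m normal_mx g) i j = 0.
Proof.
move=> [[_ rf] Hpath] Hg.
have key : forall n (v : 'rV[R]_d), (forall k : 'I_d, (n <= k)%N -> dot v (p k) = 0) ->
    forall j : 'I_d, (n.+1 <= j)%N -> dot v (g j) = 0.
  elim=> [|n IH] v Hv j Hj.
    by rewrite (perp_all_eq0 rf (fun k => Hv k (leq0n _))) /dot big1 // => k _; rewrite mxE mul0r.
  have Hn1 : (n.+1 < d)%N by apply: leq_ltn_trans (ltn_ord j); apply: ltnW.
  have Hn : (n < d)%N by apply: ltnW.
  pose a := p (Ordinal Hn); pose b := p (Ordinal Hn1).
  pose e := a - dot a b *: b.
  have eperp : forall k : 'I_d, (n.+1 <= k)%N -> dot e (p k) = 0.
    by move=> k Hk; apply: (Hpath (Ordinal Hn) (Ordinal Hn1) k).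
  pose beta := dot v e / dot e e.
  pose v' := v - beta *: e.
  have Hv' : forall k : 'I_d, (n <= k)%N -> dot v' (p k) = 0.
    move=> k Hk; rewrite dotBl dotZl.
    case: (ltnP n k) => Hnk.
      by rewrite Hv // eperp // mulr0 subr0.
    have -> : k = Ordinal Hn by apply/val_inj => /=; apply/eqP; rewrite eqn_leq Hk Hnk.
    have eaee : dot e a = dot e e.
      have eb : dot e b = 0 by apply: eperp; rewrite /=.
      by rewrite {2}/e dotBr dotZr eb mulr0 subr0.
    have vae : dot v a = dot v e.
      by rewrite /e dotBr dotZr (Hv (Ordinal Hn1)) ?mulr0 ?subr0.
    rewrite -/a eaee vae /beta.
    have [E0|E0] := eqVneq (dot e e) 0.
      by rewrite (dot_self_eq0 E0) -(scale0r (0 : 'rV[R]_d)) dotZr !mul0r subr0.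
    by rewrite divfK // subrr.
  have -> : v = v' + beta *: e by rewrite /v' subrK.
  rewrite dotDl (IH v' Hv' j (ltnW Hj)) add0r dotZl.
  have Hja : Ordinal Hn != j by apply/eqP => /esym Ej; move: Hj; rewrite Ej /= ltnNge leqnSn.
  have Hjb : Ordinal Hn1 != j by apply/eqP => /esym Ej; move: Hj; rewrite Ej /= ltnn.
  rewrite dotBl dotZl ![dot _ (g j)]dotC (proj1 (Hg j) _ Hja) (proj1 (Hg j) _ Hjb).
  by rewrite mulr0 subr0 mulr0.
have gram : forall i j, ((normal_mx g)^T *m normal_mx g) i j = dot (g i) (g j).
  by move=> i j; rewrite !mxE; apply: eq_bigr => k _; rewrite !mxE.
have side : forall i j : 'I_d, (i + 2 <= j)%N -> dot (g i) (g j) = 0.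
  move=> i j Hij; apply: (key i.+1) => [k Hk|]; last by rewrite -addn2.
  by rewrite (proj1 (Hg i)) //; apply/eqP => Ek; move: Hk; rewrite Ek ltnn.
move=> i j /orP [H|H]; rewrite gram; first exact: side.
by rewrite dotC; apply: side.
Qed.
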